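(* Let $n,m$ be positive integers, $N=\{1,\dots,n\}$, and let $g$ be a kernel on $N$. The following are equivalent: (i) $g$ is a discrete $m$-interpolation kernel; (ii) for all $I_0\subseteq I_1\subseteq N$ and all $z:I_0\to\mathcal M_m(\mathbb C)$, $\|T_{g,z}(I_1)\|\le\|T_{g,z}\|$; (iii) for all $I_0\subseteq I_1\subseteq N$ such that $I_1\setminus I_0$ consists of a single point, and all $z:I_0\to\mathcal M_m(\mathbb C)$, $\|T_{g,z}(I_1)\|\le\|T_{g,z}\|$.
   Context: A function $g:N\times N\to\mathbb C$ is a kernel on $N$ if the matrix $(g(i,j))_{i,j\in N}$ is positive semidefinite and, with $\mathrm{spt}(g)=\{i:g(i,i)\ne0\}$, the matrix $(g(i,j))_{i,j\in\mathrm{spt}(g)}$ is positive definite. Let $g_i(j)=g(i,j)$ and let $H_g$ be the (finite-dimensional) Hilbert space spanned by $\{g_i:i\in\mathrm{spt}(g)\}$ with $\langle g_i,g_j\rangle=g(i,j)$... more precisely $\langle\sum c_ig_i,\sum d_jg_j\rangle=\sum_{i,j}g(i,j)c_i\bar d_j$. Let $H_{g,m}=\mathbb C^m\otimes H_g$, writing $ag_i=a\otimes g_i$. For $I\subseteq N$ let $H_{g,m}(I)=\mathrm{span}\{ag_i:a\in\mathbb C^m,\ i\in I\cap\mathrm{spt}(g)\}$, and for $z:I\to\mathcal M_m(\mathbb C)$ let $T_{g,z}\in\mathcal L(H_{g,m}(I))$ be defined by $T_{g,z}(ag_i)=(z(i)^*a)g_i$ for $a\in\mathbb C^m$, $i\in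 I\cap\mathrm{spt}(g)$. For $I_0\subseteq I_1\subseteq N$ let $H_{g,m}(I_0,I_1)=H_{g,m}(I_1)\ominus H_{g,m}(I_1\setminus I_0)$, and for $z:I_0\to\mathcal M_m(\mathbb C)$ let $T_{g,z}(I_1)=PT_{g,\tilde z}|_{H_{g,m}(I_0,I_1)}$, where $P$ is the orthogonal projection of $H_{g,m}(I_1)$ onto $H_{g,m}(I_0,I_1)$ and $\tilde z:I_1\to\mathcal M_m(\mathbb C)$ is any extension of $z$ (the result does not depend on the extension). $g$ is a discrete $m$-interpolation kernel if for every $I\subseteq N$ and every $z:I\to\mathcal M_m(\mathbb C)$, $\|T_{g,z}\|=\inf\{\|T_{g,\tilde z}\|:\tilde z:N\to\mathcal M_m(\mathbb C),\ \tilde z|_I=z\}$. *)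

(* Defs.v *)
From HB Require Import structures.
From mathcomp Require Import all_boot all_order all_algebra.
Set Implicit Arguments. Unset Strict Implicit. Unset Printing Implicit Defensive.
Import Order.TTheory GRing.Theory Num.Theory.
Local Open Scope ring_scope.

Section KernelDefs.
Variables (C : numClosedFieldType) (n m : nat).

Definition qform (g : 'M[C]_n) (v : 'I_n -> C) : C :=
  \sum_(i < n) \sum_(j < n) g i j * v i * (v j)^*.

Definition spt (g : 'M[C]_n) : {set 'I_n} := [set i | g i i != 0].

Definition is_kernel (g : 'M[C]_n) : Prop :=
  (forall v : 'I_n -> C, 0 <= qform g v) /\
  (forall v : 'I_n -> C, (forall i, i \notin spt g -> v i = 0) ->
     (exists i, v i != 0) -> 0 < qform g v).

(* An element sum_i a_i g_i of H_{g,m} (i in spt g) is represented by the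
   matrix A : 'M_(n,m) whose i-th row is a_i (rows outside the relevant index
   set are zero). *)
Definition ip (g : 'M[C]_n) (A B : 'M[C]_(n, m)) : C :=
  \sum_(i < n) \sum_(j < n) g i j * \sum_(k < m) A i k * (B j k)^*.

Definition inH (g : 'M[C]_n) (I : {set 'I_n}) (A : 'M[C]_(n, m)) : Prop :=
  forall i k, i \notin (I :&: spt g) -> A i k = 0.

Definition inH2 (g : 'M[C]_n) (I0 I1 : {set 'I_n}) (A : 'M[C]_(n, m)) : Prop :=
  inH g I1 A /\ (forall B, inH g (I1 :\: I0) B -> ip g A B = 0).

Definition is_proj (g : 'M[C]_n) (S : 'M[C]_(n, m) -> Prop)
  (y p : 'M[C]_(n, m)) : Prop :=
  S p /\ (forall B, S B -> ip g (y - p) B = 0).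

(* T_{g,z} : a g_i |-> (z(i)^* a) g_i *)
Definition Tmap (z : 'I_n -> 'M[C]_m) (A : 'M[C]_(n, m)) : 'M[C]_(n, m) :=
  \matrix_(i < n, k < m) \sum_(l < m) (z i l k)^* * A i l.

(* "the operator (given as a relation R x y : y is the image of x) on the
   subspace S has norm <= c" : ||y||^2 <= c^2 ||x||^2 *)
Definition opnorm_le (g : 'M[C]_n) (S : 'M[C]_(n, m) -> Prop)
  (R : 'M[C]_(n, m) -> 'M[C]_(n, m) -> Prop) (c : C) : Prop :=
  forall x y, S x -> R x y -> ip g y y <= c ^+ 2 * ip g x x.

(* ||T1|| <= ||T2||, expressed through the norm bounds *)
Definition opnorm_cmp (g : 'M[C]_n)
  (S1 : 'M[C]_(n, m) -> Prop) (R1 : 'M[C]_(n, m) -> 'M[C]_(n, m) -> Prop)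
  (S2 : 'M[C]_(n, m) -> Prop) (R2 : 'M[C]_(n, m) -> 'M[C]_(n, m) -> Prop) : Prop :=
  forall c, 0 <= c -> opnorm_le g S2 R2 c -> opnorm_le g S1 R1 c.

Definition Trel (z : 'I_n -> 'M[C]_m) (x y : 'M[C]_(n, m)) : Prop := y = Tmap z x.

(* T_{g,z}(I1) on H_{g,m}(I0,I1) : P T_{g,z~}, where the total function z
   serves as the extension z~ of z|_{I0} *)
Definition Trel2 (g : 'M[C]_n) (I0 I1 : {set 'I_n}) (z : 'I_n -> 'M[C]_m)
  (x y : 'M[C]_(n, m)) : Prop := is_proj g (inH2 g I0 I1) (Tmap z x) y.

(* g is a discrete m-interpolation kernel:
   ||T_{g,z}|| = inf { ||T_{g,z~}|| : z~ : N -> M_m, z~|_I = z } *)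
Definition interp_kernel (g : 'M[C]_n) : Prop :=
  forall (I : {set 'I_n}) (z : 'I_n -> 'M[C]_m),
    (* ||T_{g,z}|| is a lower bound *)
    (forall z' : 'I_n -> 'M[C]_m, (forall i, i \in I -> z' i = z i) ->
       opnorm_cmp g (inH g I) (Trel z) (inH g setT) (Trel z'))
    /\
    (* and the greatest one: inf <= ||T_{g,z}|| *)
    (forall c, 0 <= c -> opnorm_le g (inH g I) (Trel z) c ->
     forall eps, 0 < eps ->
       exists z' : 'I_n -> 'M[C]_m, (forall i, i \in I -> z' i = z i) /\
         opnorm_le g (inH g setT) (Trel z') (c + eps)).

End KernelDefs.

(* Main.v *)
Require Import Defs.
From HB Require Import structures.
From mathcomp Require Import all_boot all_order all_algebra.
From mathcomp Require Import ring.
Import Order.TTheory GRing.Theory Num.Theory.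
Local Open Scope ring_scope.
Set Implicit Arguments. Unset Strict Implicit. Unset Printing Implicit Defensive.

Lemma lim_sq (C : numClosedFieldType) (a b c : C) : 0 <= a -> 0 <= b -> 0 <= c ->
  (forall eps, 0 < eps -> a <= (c + eps)^+2 * b) -> a <= c^+2 * b.
Proof.
move=> a0 b0 c0 h.
have rc : c^+2 * b \is Num.real by apply: ger0_real; apply: mulr_ge0 => //; apply: exprn_ge0.
have ra : a \is Num.real := ger0_real a0.
rewrite real_leNgt //; apply/negP => lt.
have [b0'|bpos] : b = 0 \/ 0 < b.
  by move: b0; rewrite le_eqVlt => /orP[/eqP <-|]; [left|right].
  move: (h 1 ltr01); rewrite b0' mulr0 => a0'; move: lt; rewrite b0' mulr0 => lt.
  by have := lt_le_trans lt a0'; rewrite ltxx.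
set d := a - c^+2 * b; have dpos : 0 < d by rewrite subr_gt0.
set K := (2%:R * c + 1) * b.
have K0 : 0 <= K by apply: mulr_ge0 => //; apply: addr_ge0 => //; apply: mulr_ge0.
have den : 0 < K + d by apply: lt_le_trans dpos _; rewrite lerDr.
set eps := d / (K + d); have epos : 0 < eps by apply: divr_gt0.
have e1 : eps <= 1 by rewrite ler_pdivrMr // mul1r lerDr.
have hlt : (c + eps)^+2 * b < a.
  have -> : (c + eps)^+2 * b = c^+2 * b + eps * ((2%:R * c + eps) * b) by ring.
  have h1 : eps * ((2%:R * c + eps) * b) <= eps * K.
    by apply: ler_wpM2l; [exact: ltW|]; rewrite /K; apply: ler_wpM2r => //; rewrite lerD2l.
  have h2 : eps * K < d.
    by rewrite /eps mulrAC ltr_pdivrMr // ltr_pM2l // ltrDl.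
  have -> : a = c^+2 * b + d by rewrite /d; ring.
  by rewrite ltrD2l; apply: le_lt_trans h1 h2.
by have := lt_le_trans hlt (h eps epos); rewrite ltxx.
Qed.

Lemma inj_surj (C : fieldType) n m (f : 'M[C]_(n,m) -> 'M[C]_(n,m)) :
  (forall a x y, f (a *: x + y) = a *: f x + f y) -> injective f ->
  forall y, exists x, f x = y.
Proof.
move=> lf inj y.
pose F : {linear 'M[C]_(n,m) -> 'M[C]_(n,m)} :=
  HB.pack f (GRing.isLinear.Build C _ _ _ f lf).
pose L : 'End('M[C]_(n,m)) := linfun F.
have hL : lker L == 0%VS.
  by apply/lker0P => u v; rewrite !lfunE /=; apply: inj.
exists ((L^-1)%VF y).
by have := lker0_lfunVK hL y; rewrite lfunE.
Qed.

Section Basic.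
Variables (C : numClosedFieldType) (n m : nat) (g : 'M[C]_n).
Hypothesis hg : is_kernel g.

Definition bf (u v : 'I_n -> C) := \sum_(i < n) \sum_(j < n) g i j * u i * (v j)^*.

Lemma bf_lin (u v : 'I_n -> C) (c : C) :
  bf (fun k => u k + c * v k) (fun k => u k + c * v k) =
  bf u u + c^* * bf u v + c * bf v u + c * c^* * bf v v.
Proof.
rewrite /bf !mulr_sumr -!big_split; apply: eq_bigr => i _.
rewrite !mulr_sumr -!big_split; apply: eq_bigr => j _ /=.
rewrite !rmorphD !rmorphM /=; ring.
Qed.

Lemma bf_ge0 u : 0 <= bf u u.
Proof. exact: hg.1. Qed.

Lemma bf_herm u v : bf v u = (bf u v)^*.
Proof.
have r1 : (bf u v + bf v u)^* = bf u v + bf v u.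
  have := bf_lin u v 1; rewrite conjC1 => e.
  have -> : bf u v + bf v u = bf (fun k => u k + 1 * v k) (fun k => u k + 1 * v k) - bf u u - bf v v.
    by rewrite e; ring.
  by rewrite !rmorphB /= !geC0_conj // bf_ge0.
have r2 : ('i * (bf v u - bf u v))^* = 'i * (bf v u - bf u v).
  have := bf_lin u v 'i; rewrite conjCi => e.
  have -> : 'i * (bf v u - bf u v) = bf (fun k => u k + 'i * v k) (fun k => u k + 'i * v k) - bf u u
     - bf v v.
    rewrite e; have ii : 'i * - 'i = 1 :> C by rewrite mulrN -expr2 sqrCi opprK.
    rewrite ii; ring.
  by rewrite !rmorphB /= !geC0_conj // bf_ge0.
set x := bf u v in r1 r2 *; set y := bf v u in r1 r2 *.
rewrite rmorphM /= conjCi rmorphB /= in r2.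
have hi : 'i != 0 :> C by rewrite neq0Ci.
have r3 : x^* - y^* = y - x.
  apply: (mulfI hi); rewrite -r2; ring.
rewrite rmorphD /= in r1.
have h2 : (2%:R : C) != 0 by rewrite pnatr_eq0.
apply: (mulfI h2).
have -> : 2%:R * y = (x + y) + (y - x) by ring.
by rewrite -r1 -r3; ring.
Qed.


Implicit Types A B D : 'M[C]_(n, m).

Lemma ip_bf A B : ip g A B = \sum_(k < m) bf (fun i => A i k) (fun j => B j k).
Proof.
rewrite /ip /bf [RHS]exchange_big; apply: eq_bigr => i _ /=.
rewrite [RHS]exchange_big; apply: eq_bigr => j _ /=; rewrite mulr_sumr.
by apply: eq_bigr => k _; rewrite mulrA.
Qed.

Lemma ip_herm A B : ip g B A = (ip g A B)^*.
Proof. by rewrite !ip_bf rmorph_sum; apply: eq_bigr => k _; rewrite bf_herm. Qed.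

Lemma ip_ge0 A : 0 <= ip g A A.
Proof. by rewrite ip_bf; apply: sumr_ge0 => k _; apply: bf_ge0. Qed.

Lemma ip_real A : (ip g A A)^* = ip g A A.
Proof. by rewrite geC0_conj // ip_ge0. Qed.

Lemma ipDl A B D : ip g (A + B) D = ip g A D + ip g B D.
Proof.
rewrite /ip -big_split /=; apply: eq_bigr => i _; rewrite -big_split /=; apply: eq_bigr => j _.
rewrite -mulrDr -big_split /=; congr (_ * _); apply: eq_bigr => k _; by rewrite mxE mulrDl.
Qed.

Lemma ipZl a A D : ip g (a *: A) D = a * ip g A D.
Proof.
rewrite /ip mulr_sumr; apply: eq_bigr => i _; rewrite mulr_sumr; apply: eq_bigr => j _.
rewrite [RHS]mulrCA; congr (_ * _); rewrite mulr_sumr; apply: eq_bigr => k _; by rewrite mxE mulrA.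
Qed.

Lemma ipNl A D : ip g (- A) D = - ip g A D.
Proof. by rewrite -scaleN1r ipZl mulN1r. Qed.

Lemma ipBl A B D : ip g (A - B) D = ip g A D - ip g B D.
Proof. by rewrite ipDl ipNl. Qed.

Lemma ip0l D : ip g 0 D = 0.
Proof. by rewrite -(scale0r 0) ipZl mul0r. Qed.

Lemma ipDr A B D : ip g D (A + B) = ip g D A + ip g D B.
Proof. by rewrite ip_herm ipDl rmorphD /= -!ip_herm. Qed.

Lemma ipBr A B D : ip g D (A - B) = ip g D A - ip g D B.
Proof. by rewrite ip_herm ipBl rmorphB /= -!ip_herm. Qed.

Lemma ip0r D : ip g D 0 = 0.
Proof. by rewrite ip_herm ip0l conjC0. Qed.

Lemma ip_eq0 A : inH g setT A -> ip g A A = 0 -> A = 0.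
Proof.
move=> hA; rewrite ip_bf => /eqP; rewrite psumr_eq0; last by move=> k _; apply: bf_ge0.
move=> /allP h; apply/matrixP => i k; rewrite mxE.
have := h k (mem_index_enum _); rewrite implyTb => /eqP h0.
apply/eqP; apply: contraT => nz.
have : 0 < bf (fun i => A i k) (fun j => A j k).
  apply: hg.2; last by exists i.
  by move=> i' hi'; apply: hA; rewrite setTI.
by rewrite h0 ltxx.
Qed.

Lemma ip_pyth A B : ip g A B = 0 -> ip g (A + B) (A + B) = ip g A A + ip g B B.
Proof.
move=> h; rewrite ipDl !ipDr h.
have -> : ip g B A = 0 by rewrite ip_herm h conjC0.
by rewrite addr0 add0r.
Qed.


Lemma inH_setT I A : inH g I A -> inH g setT A.
Proof.
move=> h i k hi; apply: h; apply: contra hi; rewrite !inE => /andP[_ ->].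
by rewrite andbT.
Qed.

Lemma inH_T I z A : inH g I A -> inH g I (Tmap z A).
Proof. by move=> h i k hi; rewrite mxE big1 // => l _; rewrite h ?mulr0. Qed.

Lemma interp_ii (hi : interp_kernel m g) I0 I1 (z : 'I_n -> 'M[C]_m) :
  opnorm_cmp g (inH2 g I0 I1) (Trel2 g I0 I1 z) (inH g I0) (Trel z).
Proof.
move=> c c0 hc x y hx [hy1 hy2].
apply: lim_sq; [exact: ip_ge0|exact: ip_ge0|exact: c0|] => eps eps0.
have [_ hb] := hi I0 z.
have [z' [hz' hn]] := hb c c0 hc eps eps0.
have hw : ip g (Tmap z' x) (Tmap z' x) <= (c + eps)^+2 * ip g x x.
  by apply: hn => //; exact: (inH_setT hx.1).
have hd : inH g (I1 :\: I0) (Tmap z' x - Tmap z x).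
  move=> i k hi'; rewrite !mxE; case: (boolP (i \in I0)) => hi0.
    by rewrite hz' // subrr.
  have hx0 : forall l, x i l = 0.
    move=> l; apply: hx.1; apply: contra hi'; rewrite !inE => /andP[h1 h2].
    by rewrite hi0 h1 h2.
  by rewrite !big1 ?subrr // => l _; rewrite hx0 mulr0.
have o1 : ip g (Tmap z' x - y) y = 0.
  have -> : Tmap z' x - y = (Tmap z x - y) + (Tmap z' x - Tmap z x).
    by rewrite [RHS]addrC addrA subrK.
  by rewrite ipDl (hy2 y hy1) add0r ip_herm (hy1.2 _ hd) conjC0.
have e : Tmap z' x = y + (Tmap z' x - y) by rewrite addrC subrK.
have e2 : ip g (Tmap z' x) (Tmap z' x) = ip g y y + ip g (Tmap z' x - y) (Tmap z' x - y).
  by rewrite {1 2}e ip_pyth // ip_herm o1 conjC0.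
apply: (le_trans _ hw); rewrite e2 lerDl; exact: ip_ge0.
Qed.


Definition PL (p : 'I_n) (y : 'M[C]_(n, m)) : 'M[C]_(n, m) :=
  \matrix_(i, k) if i == p then (\sum_(j < n) g j p * y j k) / g p p else 0.
Definition Qp (p : 'I_n) (y : 'M[C]_(n, m)) : 'M[C]_(n, m) := y - PL p y.
Definition rowp (p : 'I_n) (y : 'M[C]_(n, m)) := forall j k, j != p -> y j k = 0.

Lemma PL_lin p a x y : PL p (a *: x + y) = a *: PL p x + PL p y.
Proof.
apply/matrixP => i k; rewrite !mxE; case: eqP => _; last by rewrite mulr0 addr0.
rewrite mulrA -mulrDl; congr (_ / _); rewrite mulr_sumr -big_split /=.
by apply: eq_bigr => j _; rewrite !mxE; ring.
Qed.

Lemma T_lin (z : 'I_n -> 'M[C]_m) a x y : Tmap z (a *: x + y) = a *: Tmap z x + Tmap z y.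
Proof.
apply/matrixP => i k; rewrite !mxE mulr_sumr -big_split /=.
by apply: eq_bigr => j _; rewrite !mxE; ring.
Qed.

Lemma Q_lin p a x y : Qp p (a *: x + y) = a *: Qp p x + Qp p y.
Proof. by rewrite /Qp PL_lin scalerBr; rewrite opprD addrACA. Qed.

Lemma PL_rowp p y : rowp p (PL p y).
Proof. by move=> j k /negPf hj; rewrite mxE hj. Qed.

Lemma T_rowp p z y : rowp p y -> rowp p (Tmap z y).
Proof. by move=> h j k hj; rewrite mxE big1 // => l _; rewrite h // mulr0. Qed.

Lemma ip_rowp p A B : rowp p B ->
  ip g A B = \sum_(k < m) (\sum_(i < n) g i p * A i k) * (B p k)^*.
Proof.
move=> hB; rewrite /ip.
have e : forall i, \sum_(j < n) g i j * \sum_(k < m) A i k * (B j k)^* =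
    g i p * \sum_(k < m) A i k * (B p k)^*.
  move=> i; rewrite (bigD1 p) //= [X in _ + X]big1 ?addr0 // => j hj.
  by rewrite big1 ?mulr0 // => k _; rewrite hB // conjC0 mulr0.
under eq_bigr => i _ do rewrite e mulr_sumr.
rewrite exchange_big /=; apply: eq_bigr => k _; rewrite mulr_suml.
by apply: eq_bigr => i _; rewrite mulrA.
Qed.

Lemma PL_ip p A B : g p p != 0 -> rowp p B -> ip g (PL p A) B = ip g A B.
Proof.
move=> hp hB; rewrite !(ip_rowp _ hB); apply: eq_bigr => k _; congr (_ * _).
rewrite (bigD1 p) //= big1 ?addr0 => [|i hi]; last by rewrite mxE (negPf hi) mulr0.
by rewrite mxE eqxx mulrC divfK.
Qed.

Lemma PL_id p y : g p p != 0 -> rowp p y -> PL p y = y.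
Proof.
move=> hp hy; apply/matrixP => i k; rewrite mxE; case: eqP => [->|/eqP hi]; last by rewrite hy.
rewrite (bigD1 p) //= big1 ?addr0 => [|j hj]; last by rewrite hy // mulr0.
by rewrite mulrAC divff // mul1r.
Qed.

Lemma Q_orth p A B : g p p != 0 -> rowp p B -> ip g (Qp p A) B = 0.
Proof. by move=> hp hB; rewrite /Qp ipBl PL_ip // subrr. Qed.

Lemma Q_rowp p y : g p p != 0 -> rowp p y -> Qp p y = 0.
Proof. by move=> hp hy; rewrite /Qp PL_id // subrr. Qed.

Lemma ip_decomp p y : g p p != 0 ->
  ip g y y = ip g (Qp p y) (Qp p y) + ip g (PL p y) (PL p y).
Proof.
move=> hp; have e : y = Qp p y + PL p y by rewrite /Qp subrK.
by rewrite {1 2}e ip_pyth //; apply: Q_orth => //; exact: PL_rowp.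
Qed.

Lemma inH_sub (I I' : {set 'I_n}) A : I \subset I' -> inH g I A -> inH g I' A.
Proof.
move=> hs h i k hi; apply: h; apply: contra hi; rewrite !inE => /andP[h1 ->].
by rewrite (subsetP hs _ h1).
Qed.


Lemma addE (A B : 'M[C]_(n, m)) i k : (A + B) i k = A i k + B i k.
Proof. by rewrite mxE. Qed.
Lemma subE (A B : 'M[C]_(n, m)) i k : (A - B) i k = A i k - B i k.
Proof. by rewrite !mxE. Qed.
Lemma scaleE a (A : 'M[C]_(n, m)) i k : (a *: A) i k = a * A i k.
Proof. by rewrite mxE. Qed.
Lemma zeroE i k : (0 : 'M[C]_(n, m)) i k = 0.
Proof. by rewrite mxE. Qed.
Lemma Tmap_entry (z : 'I_n -> 'M[C]_m) A i k :
  Tmap z A i k = \sum_(l < m) (z i l k)^* * A i l.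
Proof. by rewrite mxE. Qed.
Lemma PL_entry p A i k :
  PL p A i k = if i == p then (\sum_(j < n) g j p * A j k) / g p p else 0.
Proof. by rewrite mxE. Qed.

Lemma lin_sum (f : 'M[C]_(n, m) -> C)
  (hf : forall a x y, f (a *: x + y) = a * f x + f y) (I : finType) (a : I -> C)
  (v : I -> 'M[C]_(n, m)) : f (\sum_i a i *: v i) = \sum_i a i * f (v i).
Proof.
have f0 : f 0 = 0.
  have := hf 1 0 0; rewrite scale1r addr0 mul1r => e.
  by apply: (addrI (f 0)); rewrite addr0 -e.
have fD : {morph f : x y / x + y >-> x + y}.
  by move=> x y; have := hf 1 x y; rewrite scale1r mul1r.
rewrite (big_morph f fD f0); apply: eq_bigr => i _.
by have := hf (a i) (v i) 0; rewrite !addr0 f0 addr0.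
Qed.

Lemma TD (z : 'I_n -> 'M[C]_m) x y : Tmap z (x + y) = Tmap z x + Tmap z y.
Proof. by have := T_lin z 1 x y; rewrite !scale1r. Qed.
Lemma QD p x y : Qp p (x + y) = Qp p x + Qp p y.
Proof. by have := Q_lin p 1 x y; rewrite !scale1r. Qed.
Lemma PLD p x y : PL p (x + y) = PL p x + PL p y.
Proof. by have := PL_lin p 1 x y; rewrite !scale1r. Qed.

Lemma inH_lin I a A B : inH g I A -> inH g I B -> inH g I (a *: A + B).
Proof. by move=> hA hB i k hi; rewrite addE scaleE hA // hB // mulr0 addr0. Qed.
Lemma inH_add I A B : inH g I A -> inH g I B -> inH g I (A + B).
Proof. by move=> hA hB; have := inH_lin 1 hA hB; rewrite scale1r. Qed.
Lemma inH_subr I A B : inH g I A -> inH g I B -> inH g I (A - B).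
Proof. by move=> hA hB i k hi; rewrite subE hA // hB // subr0. Qed.

Lemma PL_inH (I : {set 'I_n}) p y : p \in I -> g p p != 0 -> inH g I (PL p y).
Proof.
move=> hpI hp i k hi; rewrite PL_entry; case: eqP => // ei; subst i.
by move: hi; rewrite !inE hpI hp.
Qed.

Section OneStep.
Variables (p : 'I_n) (J : {set 'I_n}) (z : 'I_n -> 'M[C]_m) (c c' : C).
Hypotheses (hpJ : p \notin J) (hp : g p p != 0) (c0 : 0 <= c) (cc : c < c')
  (hJ : opnorm_le g (inH g J) (Trel z) c)
  (h3 : opnorm_le g (inH2 g J (p |: J)) (Trel2 g J (p |: J) z) c).

Local Notation Tz := (Tmap z).
Local Notation I1 := (p |: J).

Lemma inHp_rowp B : inH g (I1 :\: J) B -> rowp p B.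
Proof.
move=> h j k hj; apply: h; rewrite !inE (negPf hj) /=.
by case: (j \in J).
Qed.

Lemma pI1 : p \in I1.
Proof. by rewrite !inE eqxx. Qed.

Lemma pI1J : p \in I1 :\: J.
Proof. by rewrite !inE eqxx hpJ. Qed.

Lemma proj_Q x : inH g I1 x -> Trel2 g J I1 z x (Qp p (Tz x)).
Proof.
move=> hx; split; [split|].
- apply: inH_subr; first exact: inH_T.
  exact: PL_inH pI1 hp.
- by move=> B hB; apply: Q_orth => //; exact: inHp_rowp hB.
- move=> B hB; have -> : Tz x - Qp p (Tz x) = PL p (Tz x) by rewrite /Qp opprB addrC subrK.
  by rewrite ip_herm (hB.2 _ (PL_inH _ pI1J hp)) conjC0.
Qed.

Lemma QT_Q x : Qp p (Tz x) = Qp p (Tz (Qp p x)).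
Proof.
have e : x = Qp p x + PL p x by rewrite /Qp subrK.
rewrite {1}e TD QD (@Q_rowp _ (Tz (PL p x))) ?addr0 //.
by apply: T_rowp; apply: PL_rowp.
Qed.

Lemma QTbound x : inH g I1 x -> ip g (Qp p (Tz x)) (Qp p (Tz x)) <= c^+2 * ip g x x.
Proof.
move=> hx.
have hq : inH2 g J I1 (Qp p x).
  split; first by apply: inH_subr => //; exact: PL_inH pI1 hp.
  by move=> B hB; apply: Q_orth => //; exact: inHp_rowp hB.
have := h3 hq (proj_Q hq.1); rewrite -QT_Q => hb.
apply: (le_trans hb); apply: ler_wpM2l; first exact: exprn_ge0.
by rewrite (ip_decomp x hp) lerDl ip_ge0.
Qed.


Definition G (a b : 'M[C]_(n, m)) :=
  c'^+2 * ip g a b - ip g (Qp p (Tz a)) (Qp p (Tz b)).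

Lemma c'0 : 0 <= c'.
Proof. exact: le_trans c0 (ltW cc). Qed.

Lemma csq : c^+2 <= c'^+2.
Proof. by rewrite !expr2; apply: ler_pM => //; exact: ltW. Qed.

Lemma csqlt : 0 < c'^+2 - c^+2.
Proof.
have -> : c'^+2 - c^+2 = (c' - c) * (c' + c) by ring.
apply: mulr_gt0; first by rewrite subr_gt0.
by apply: ltr_wpDr => //; exact: le_lt_trans c0 cc.
Qed.

Lemma G_lin s a1 a2 b : G (s *: a1 + a2) b = s * G a1 b + G a2 b.
Proof. by rewrite /G T_lin Q_lin (ipDl (s *: a1)) (ipDl (s *: Qp p (Tz a1))) !ipZl; ring. Qed.

Lemma G_herm a b : G b a = (G a b)^*.
Proof.
rewrite /G rmorphB rmorphM /= -!ip_herm geC0_conj //.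
by apply: exprn_ge0; exact: c'0.
Qed.

Lemma GD a1 a2 b : G (a1 + a2) b = G a1 b + G a2 b.
Proof. by have := G_lin 1 a1 a2 b; rewrite scale1r mul1r. Qed.

Lemma G0 b : G 0 b = 0.
Proof.
have := GD 0 0 b; rewrite addr0 => e.
by apply: (addrI (G 0 b)); rewrite addr0 -e.
Qed.

Lemma GZ s a b : G (s *: a) b = s * G a b.
Proof. by have := G_lin s a 0 b; rewrite !addr0 G0 addr0. Qed.

Lemma GB a1 a2 b : G (a1 - a2) b = G a1 b - G a2 b.
Proof. by rewrite -scaleN1r addrC G_lin mulN1r addrC. Qed.

Lemma GDr a b1 b2 : G a (b1 + b2) = G a b1 + G a b2.
Proof. by rewrite G_herm GD rmorphD /= -!G_herm. Qed.

Lemma G_orth a : (forall i k, i \in J :&: spt g -> G a (delta_mx i k) = 0) ->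
  forall h, inH g J h -> G a h = 0.
Proof.
move=> H h hh; rewrite G_herm (matrix_sum_delta h).
have hf : forall s x y, (fun M => G M a) (s *: x + y) = s * (fun M => G M a) x + (fun M => G M a) y.
  by move=> s x y; rewrite /= G_lin.
have f0 : G 0 a = 0 by exact: G0.
rewrite (big_morph (fun M => G M a) (fun x y => GD x y a) f0) rmorph_sum big1 // => i _.
rewrite (lin_sum hf) rmorph_sum big1 // => k _ /=.
case: (boolP (i \in J :&: spt g)) => hi.
  by rewrite G_herm H // conjC0 mulr0 conjC0.
by rewrite hh // mul0r conjC0.
Qed.

Lemma Gpos w : inH g I1 w -> 0 <= G w w.
Proof.
move=> hw; rewrite /G subr_ge0; apply: (le_trans (QTbound hw)).
by apply: ler_wpM2r; [exact: ip_ge0|exact: csq].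
Qed.

Lemma Gdef w : inH g J w -> G w w = 0 -> w = 0.
Proof.
move=> hw e; have hw1 := inH_sub (subsetUr [set p] J) hw.
have hb := QTbound hw1.
have : (c'^+2 - c^+2) * ip g w w <= 0.
  move: e; rewrite /G => /eqP; rewrite subr_eq0 => /eqP e.
  by rewrite mulrBl e subr_le0.
rewrite pmulr_rle0 ?csqlt // => h0.
have : ip g w w = 0 by apply: le_anti; rewrite h0 ip_ge0.
exact: ip_eq0 (inH_setT hw).
Qed.

Lemma G_proj y : exists phi, inH g J phi /\ forall h, inH g J h -> G (y - phi) h = 0.
Proof.
pose L (phi : 'M[C]_(n, m)) : 'M[C]_(n, m) :=
  \matrix_(i, k) if i \in J :&: spt g then G phi (delta_mx i k) else phi i k.
have LE : forall phi i k, L phi i k = if i \in J :&: spt g then G phi (delta_mx i k) else phi i k.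
  by move=> phi i k; rewrite mxE.
have lL : forall a x y, L (a *: x + y) = a *: L x + L y.
  move=> a x1 y1; apply/matrixP => i k; rewrite addE scaleE !LE.
  by case: ifP => _; rewrite ?G_lin // addE scaleE.
have iL : injective L.
  move=> x1 y1 e; set d := x1 - y1.
  have hd : L d = 0.
    have e3 : d + y1 = x1 by rewrite /d subrK.
    have := lL 1 d y1; rewrite !scale1r e3 e => e2.
    by apply: (addIr (L y1)); rewrite add0r -e2.
  have hdJ : inH g J d.
    by move=> i k hi; have := congr1 (fun M : 'M[C]_(n, m) => M i k) hd; rewrite LE zeroE (negPf hi).
  have hdG : forall i k, i \in J :&: spt g -> G d (delta_mx i k) = 0.
    by move=> i k hi; have := congr1 (fun M : 'M[C]_(n, m) => M i k) hd; rewrite LE zeroE hi.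
  have : d = 0 by apply: (Gdef hdJ); apply: (G_orth hdG hdJ).
  by move/eqP; rewrite subr_eq0 => /eqP.
have [phi hphi] := inj_surj lL iL
  (\matrix_(i, k) if i \in J :&: spt g then G y (delta_mx i k) else 0).
exists phi; split.
  by move=> i k hi; have := congr1 (fun M : 'M[C]_(n, m) => M i k) hphi; rewrite LE mxE (negPf hi).
apply: G_orth => i k hi; have := congr1 (fun M : 'M[C]_(n, m) => M i k) hphi; rewrite LE mxE hi => e.
by rewrite GB e subrr.
Qed.


Lemma one_step : exists z' : 'I_n -> 'M[C]_m, (forall i, i \in J -> z' i = z i) /\
  opnorm_le g (inH g I1) (Trel z') c'.
Proof.
have [phi hphi] := fin_all_exists (fun l : 'I_m => G_proj (delta_mx p l)).
pose z' i := if i == p then \matrix_(l, k) ((PL p (Tz (phi l))) p k)^* else z i.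
exists z'; split.
  move=> i hi; rewrite /z'; case: eqP => // ei.
  by move: hpJ; rewrite -ei hi.
move=> x y hx ->.
pose rx : 'M[C]_(n, m) := \sum_l x p l *: delta_mx p l.
have rxE : forall i k, rx i k = if i == p then x p k else 0.
  move=> i k; rewrite summxE; under eq_bigr => l _ do rewrite !mxE.
  have [ei|ne] := eqVneq i p. subst i.
    rewrite (bigD1 k) //= eqxx mulr1 big1 ?addr0 // => l hl.
    by rewrite eq_sym (negPf hl) mulr0.
  by rewrite big1 // => l _; rewrite mulr0.
pose psi : 'M[C]_(n, m) := \sum_l x p l *: phi l.
pose h := x - rx.
have hh : inH g J h.
  move=> i k hi; rewrite subE rxE; have [ei|ne] := eqVneq i p.
    by rewrite ei subrr.
  rewrite subr0; apply: hx; apply: contra hi; rewrite !inE (negPf ne) /=.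
  by move=> /andP[-> ->].
have hpsi : inH g J psi.
  move=> i k hi; rewrite summxE big1 // => l _.
  by rewrite scaleE (hphi l).1 // mulr0.
pose Phi := h + psi.
have hPhi : inH g J Phi by apply: inH_add.
have hPhi1 : inH g I1 Phi by apply: inH_sub hPhi; exact: subsetUr.
have eT : Tmap z' x = Tz h + PL p (Tz psi).
  apply/matrixP => i k; rewrite addE !Tmap_entry /z'.
  have [ei|ne] := eqVneq i p.
    subst i; rewrite [X in _ = X + _]big1 ?add0r => [|l _]; last by rewrite /h subE rxE eqxx subrr mulr0.
    under eq_bigr => l _ do rewrite mxE conjCK.
    have hf : forall a x1 y1, (fun M => PL p (Tz M) p k) (a *: x1 + y1) =
        a * (fun M => PL p (Tz M) p k) x1 + (fun M => PL p (Tz M) p k) y1.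
      by move=> a x1 y1; rewrite /= T_lin PL_lin addE scaleE.
    rewrite /psi; have := lin_sum hf (fun l => x p l) phi; rewrite /= => ->.
    by apply: eq_bigr => l _; rewrite mulrC.
  rewrite PL_entry (negPf ne) addr0; apply: eq_bigr => l _.
  by rewrite /h subE rxE (negPf ne) subr0.
set u := Tz h; set v := PL p (Tz psi).
have hv : rowp p v by apply: PL_rowp.
have hrx : rowp p rx by move=> j k hj; rewrite rxE (negPf hj).
have eQ : Qp p (Tz x) = Qp p u.
  have ex : x = h + rx by rewrite /h subrK.
  by rewrite {1}ex TD QD (@Q_rowp _ (Tz rx)) ?addr0 //; apply: T_rowp.
have eQy : Qp p (u + v) = Qp p u by rewrite QD (Q_rowp hp hv) addr0.
have ePL : PL p (u + v) = PL p (Tz Phi) by rewrite PLD (PL_id hp hv) /Phi TD PLD.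
rewrite eT (ip_decomp _ hp) eQy ePL -eQ.
have b1 : ip g (PL p (Tz Phi)) (PL p (Tz Phi)) <= G Phi Phi.
  have := hJ hPhi (erefl (Tz Phi)); rewrite (ip_decomp _ hp) => hb.
  rewrite /G lerBrDr addrC; apply: (le_trans hb).
  by apply: ler_wpM2r; [exact: ip_ge0|exact: csq].
have b2 : G Phi Phi <= G x x.
  pose w := x - Phi.
  have ew : x = Phi + w by rewrite /w addrC subrK.
  have hw : inH g I1 w by apply: inH_subr.
  have wE : w = \sum_l x p l *: (delta_mx p l - phi l).
    rewrite (eq_bigr (fun l => x p l *: delta_mx p l - x p l *: phi l)); last first.
      by move=> l _; rewrite scalerBr.
    rewrite sumrB -/rx -/psi /w /Phi /h.
    by rewrite opprD opprB addrA [x + _]addrC subrK.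
  have Gw0 : forall h', inH g J h' -> G w h' = 0.
    move=> h' hh'; rewrite wE.
    have hf : forall a x1 y1, (fun M => G M h') (a *: x1 + y1) =
        a * (fun M => G M h') x1 + (fun M => G M h') y1 by move=> a x1 y1; rewrite /= G_lin.
    rewrite (lin_sum hf) big1 // => l _ /=.
    by rewrite (hphi l).2 // mulr0.
  rewrite [in X in _ <= X]ew (GD Phi w) (GDr Phi Phi w) (GDr w Phi w) (Gw0 _ hPhi).
  rewrite [G Phi w]G_herm (Gw0 _ hPhi) conjC0 addr0 add0r lerDl.
  exact: Gpos hw.
have := le_trans b1 b2; rewrite /G lerBrDr.
by rewrite addrC.
Qed.

End OneStep.

Lemma opnorm_mono (S : 'M[C]_(n, m) -> Prop) R (c c' : C) : 0 <= c -> c <= c' ->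
  opnorm_le g S R c -> opnorm_le g S R c'.
Proof.
move=> c0 cc h x y hx hy; apply: (le_trans (h x y hx hy)).
apply: ler_wpM2r; first exact: ip_ge0.
by rewrite !expr2; apply: ler_pM.
Qed.

Definition cond3 := forall (I0 I1 : {set 'I_n}), I0 \subset I1 ->
      (exists p : 'I_n, I1 :\: I0 = [set p]) ->
      forall z : 'I_n -> 'M[C]_m,
        opnorm_cmp g (inH2 g I0 I1) (Trel2 g I0 I1 z) (inH g I0) (Trel z).

Lemma step_any (h3all : cond3) (p : 'I_n) (J : {set 'I_n}) (z : 'I_n -> 'M[C]_m) (c c' : C) :
  p \notin J -> 0 <= c -> c < c' -> opnorm_le g (inH g J) (Trel z) c ->
  exists z' : 'I_n -> 'M[C]_m, (forall i, i \in J -> z' i = z i) /\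
    opnorm_le g (inH g (p |: J)) (Trel z') c'.
Proof.
move=> hpJ c0 cc hJ.
have [hp|hp0] := boolP (g p p != 0).
  have h3 : opnorm_le g (inH2 g J (p |: J)) (Trel2 g J (p |: J) z) c.
    apply: (h3all J (p |: J) _ _ z c c0 hJ); first exact: subsetUr.
    exists p; apply/setP => i; rewrite !inE.
    by case: eqVneq => [->|_] /=; [rewrite hpJ | rewrite andNb].
  exact: (one_step hpJ hp c0 cc hJ h3).
exists z; split => //.
have hp0' : (g p p != 0) = false by apply/negbTE.
apply: (opnorm_mono c0 (ltW cc)) => x y hx hy; apply: hJ hy.
move=> i k hi; apply: hx; move: hi; rewrite !inE.
have [ei|ne] := eqVneq i p; first by subst i; rewrite hp0' !andbF.
by rewrite /=.
Qed.

Lemma extend_all (h3all : cond3) k : forall J (z : 'I_n -> 'M[C]_m) (c c' : C),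
  (#|~: J| <= k)%N -> 0 <= c -> c < c' -> opnorm_le g (inH g J) (Trel z) c ->
  exists z' : 'I_n -> 'M[C]_m, (forall i, i \in J -> z' i = z i) /\
    opnorm_le g (inH g setT) (Trel z') c'.
Proof.
elim: k => [|k IH] J z c c' hk c0 cc hJ.
  have e : J = setT.
    have : ~: J = set0 by apply/eqP; rewrite -cards_eq0 -leqn0.
    by move=> e; rewrite -[J]setCK e setC0.
  by exists z; split => //; rewrite -e; apply: (opnorm_mono c0 (ltW cc)).
have [/eqP eJ|nJ] := boolP (J == setT).
  by exists z; split => //; rewrite -eJ; apply: (opnorm_mono c0 (ltW cc)).
have : ~~ (setT \subset J) by rewrite subTset.
case/subsetPn => p _ hp.
have [m1 m2] := midf_lt cc.
have cm0 : 0 <= (c + c') / 2%:R by apply: le_trans c0 (ltW m1).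
have [z1 [e1 h1]] := step_any h3all hp c0 m1 hJ.
have hk' : (#|~: (p |: J)| <= k)%N.
  have e : ~: (p |: J) = (~: J) :\ p.
    by apply/setP => i; rewrite !inE negb_or andbC.
  move: hk; rewrite (cardsD1 p (~: J)) e !inE hp.
  by rewrite add1n ltnS.
have [z2 [e2 h2]] := IH (p |: J) z1 ((c + c') / 2%:R) c' hk' cm0 m2 h1.
exists z2; split => // i hi.
by rewrite e2 ?e1 //; apply: setU1r.
Qed.

Lemma interp_lb (I : {set 'I_n}) (z z' : 'I_n -> 'M[C]_m) : (forall i, i \in I -> z' i = z i) ->
  opnorm_cmp g (inH g I) (Trel z) (inH g setT) (Trel z').
Proof.
move=> e c c0 hc x y hx ->.
have -> : Tmap z x = Tmap z' x.
  apply/matrixP => i k; rewrite !Tmap_entry; apply: eq_bigr => l _.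
  case: (boolP (i \in I)) => hi; first by rewrite e.
  by rewrite hx ?mulr0 // inE (negPf hi).
by apply: hc => //; exact: inH_setT hx.
Qed.

Lemma iii_i (h3all : cond3) : interp_kernel m g.
Proof.
move=> I z; split; first by move=> z' e; apply: interp_lb.
move=> c c0 hc eps eps0.
have cc : c < c + eps by rewrite ltrDl.
exact: (extend_all h3all (leqnn _) c0 cc hc).
Qed.

End Basic.

Unset Implicit Arguments.

Theorem proposition2p1 (C : numClosedFieldType) (n m : nat)
  (hn : (0 < n)%N) (hm : (0 < m)%N) (g : 'M[C]_n) (hg : is_kernel g) :
  (interp_kernel m g <->
   (forall (I0 I1 : {set 'I_n}), I0 \subset I1 ->
      forall z : 'I_n -> 'M[C]_m,
        opnorm_cmp g (inH2 g I0 I1) (Trel2 g I0 I1 z) (inH g I0) (Trel z)))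
  /\
  (interp_kernel m g <->
   (forall (I0 I1 : {set 'I_n}), I0 \subset I1 ->
      (exists p : 'I_n, I1 :\: I0 = [set p]) ->
      forall z : 'I_n -> 'M[C]_m,
        opnorm_cmp g (inH2 g I0 I1) (Trel2 g I0 I1 z) (inH g I0) (Trel z))).
Proof.
have A : interp_kernel m g -> forall (I0 I1 : {set 'I_n}), I0 \subset I1 ->
    forall z : 'I_n -> 'M[C]_m,
      opnorm_cmp g (inH2 g I0 I1) (Trel2 g I0 I1 z) (inH g I0) (Trel z).
  by move=> hi I0 I1 _ z; exact: (interp_ii hg hi).
have B := iii_i hg.
split; split.
- exact: A.
- by move=> h2; apply: B => I0 I1 hs _ z; exact: h2.
- by move=> hi I0 I1 hs _ z; exact: A.
- exact: B.
Qed.
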